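(* Assume (A1). For all $i,j\in I_N$ and $(y,x)\in J_j\times J_i$, $$\mathcal{D}_{\mathrm{junction}}^{ji}(y,x)=\begin{cases}\mathcal{D}_{\mathrm{linear}}^{ji}(y,x)&\text{if }(y,x)\in\Delta^{ji},\\ \mathcal{D}_{\mathrm{implicit}}^{ji}(y,x)&\text{if }(y,x)\in(J_j\times J_i)\setminus\Delta^{ji}.\end{cases}$$
   Context: Junction: fix an integer $N\ge1$ and $N$ distinct unit vectors $e_1,\dots,e_N\in\mathbb{R}^2$. Set $J_i=[0,\infty)e_i$, $J=\bigcup_iJ_i$, $I_N=\{1,\dots,N\}$. Each $x\in J_i$ is written $x=x_ie_i$, $x_i\ge0$. For a function $f$ on $J\times J$ (variables $(y,x)$), $f^{ji}$ denotes its restriction to $J_j\times J_i$. (A1): there is $\gamma>0$ with $L_i\in C^2(\mathbb{R})$, $L_i''\ge\gamma$ for each $i$. $L_0(0)=\min_jL_j(0)$, $I_0=\{l: L_l(0)=L_0(0)\}$. $K_l(\xi)=L_l(\xi)-\xi L_l'(\xi)-L_0(0)$; $\xi_l^-\le0$ (resp. $\xi_l^+\ge0$) is the unique zero of $K_l$ on $(-\infty,0]$ (resp. $[0,\infty)$); these are $0$ iff $l\in I_0$. For $\tau\in[0,1]$: $\mathcal{E}_1(\tau,y)=\tau L_j(-y_j/\tau)-\tau L_0(0)$ if $y=y_je_j\ne0$, $\tau\ne0$; $\mathcal{E}_1(\tau,0)=0$; $\mathcal{E}_1(0,y)=+\infty$ if $y\ne0$. $\mathcal{E}_2(\tau,x)=(1-\tau)L_i(x_i/(1-\tau))+\tau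 L_0(0)$ if $x=x_ie_i\ne0$, $\tau\ne1$; $\mathcal{E}_2(\tau,0)=L_0(0)$; $\mathcal{E}_2(1,x)=+\infty$ if $x\ne0$. Define $\mathcal{D}_{\mathrm{junction}}(y,x)=\inf_{0\le\tau_1\le\tau_2\le1}\{\mathcal{E}_1(\tau_1,y)+\mathcal{E}_2(\tau_2,x)\}$ and $\mathcal{D}_{\mathrm{implicit}}(y,x)=\inf_{0\le\tau\le1}\{\mathcal{E}_1(\tau,y)+\mathcal{E}_2(\tau,x)\}$. For $(y,x)\in J_j\times J_i$: $\mathcal{D}_{\mathrm{linear}}^{ji}(y,x)=-L_j'(\xi_j^-)y_j+L_i'(\xi_i^+)x_i+L_0(0)$. If $i,j\notin I_0$, $\Delta^{ji}=\{(y,x)\in J_j\times J_i: x_i/\xi_i^+-y_j/\xi_j^-<1\}$; if $i\in I_0$ or $j\in I_0$, $\Delta^{ji}=\emptyset$. *)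

(* Defs.v *)
From Stdlib Require Import Reals.
Open Scope R_scope.

(* A point of the branch J_i is identified with its coordinate x_i >= 0
   (x = x_i e_i).  Extended-real values (+infinity) are encoded by [None]. *)

Definition E1 (L : nat -> R -> R) (L0 : R) (j : nat) (tau y : R) : option R :=
  if Req_EM_T y 0 then Some 0
  else if Req_EM_T tau 0 then None
  else Some (tau * L j (- y / tau) - tau * L0).

Definition E2 (L : nat -> R -> R) (L0 : R) (i : nat) (tau x : R) : option R :=
  if Req_EM_T x 0 then Some L0
  else if Req_EM_T tau 1 then None
  else Some ((1 - tau) * L i (x / (1 - tau)) + tau * L0).

(* finite values of the function whose infimum defines D_junction *)
Definition Djunction_set (L : nat -> R -> R) (L0 : R) (j i : nat) (y x : R)
  : R -> Prop :=
  fun r => exists t1 t2 a b, 0 <= t1 <= t2 /\ t2 <= 1 /\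
    E1 L L0 j t1 y = Some a /\ E2 L L0 i t2 x = Some b /\ r = a + b.

(* finite values of the function whose infimum defines D_implicit *)
Definition Dimplicit_set (L : nat -> R -> R) (L0 : R) (j i : nat) (y x : R)
  : R -> Prop :=
  fun r => exists t a b, 0 <= t <= 1 /\
    E1 L L0 j t y = Some a /\ E2 L L0 i t x = Some b /\ r = a + b.

Definition is_inf (S : R -> Prop) (v : R) : Prop :=
  (forall r, S r -> v <= r) /\ (forall m, (forall r, S r -> m <= r) -> m <= v).

Definition Kfun (L dL : nat -> R -> R) (L0 : R) (l : nat) (xi : R) : R :=
  L l xi - xi * dL l xi - L0.

Definition Dlinear (dL : nat -> R -> R) (L0 : R) (xim xip : nat -> R)
  (j i : nat) (y x : R) : R :=
  - dL j (xim j) * y + dL i (xip i) * x + L0.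

(* (y,x) in Delta^{ji}; empty when i or j is in I_0 *)
Definition inDelta (L : nat -> R -> R) (L0 : R) (xim xip : nat -> R)
  (j i : nat) (y x : R) : Prop :=
  L j 0 <> L0 /\ L i 0 <> L0 /\ x / xip i - y / xim j < 1.

(* Main.v *)
Require Import Defs.
From Stdlib Require Import Reals Lra Psatz.
Require Import Defs.
Open Scope R_scope.

Lemma mono_d (f' f'' : R -> R) :
  (forall z, derivable_pt_lim f' z (f'' z)) -> (forall z, 0 <= f'' z) ->
  forall p q, p <= q -> f' p <= f' q.
Proof.
  intros Hd Hp p q Hpq. destruct (Req_dec p q) as [->|Hne]; [lra|].
  destruct (MVT_cor2 f' f'' p q) as [c [Hc _]]; [lra| intros; apply Hd|].
  specialize (Hp c). nra.
Qed.

Lemma tangent (f f' f'' : R -> R) :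
  (forall z, derivable_pt_lim f z (f' z)) ->
  (forall z, derivable_pt_lim f' z (f'' z)) -> (forall z, 0 <= f'' z) ->
  forall p q, f p + f' p * (q - p) <= f q.
Proof.
  intros Hd Hd2 Hp p q.
  pose proof (mono_d f' f'' Hd2 Hp) as M.
  destruct (Rtotal_order p q) as [H|[H|H]].
  - destruct (MVT_cor2 f f' p q) as [c [Hc Hc2]]; [lra| intros; apply Hd|].
    assert (f' p <= f' c) by (apply M; lra). nra.
  - subst. lra.
  - destruct (MVT_cor2 f f' q p) as [c [Hc Hc2]]; [lra| intros; apply Hd|].
    assert (f' c <= f' p) by (apply M; lra). nra.
Qed.


Lemma PE (L dL : nat -> R -> R) L0 l :
  (forall p q, L l p + dL l p * (q - p) <= L l q) ->
  forall s z p, 0 < s -> s * Kfun L dL L0 l p + dL l p * z <= s * (L l (z / s) - L0).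
Proof.
  intros HT s z p Hs. unfold Kfun.
  specialize (HT p (z/s)).
  assert (E : s * (z/s) = z) by (field; lra).
  assert (s * (L l p + dL l p * (z / s - p)) <= s * L l (z/s)) by (apply Rmult_le_compat_l; lra).
  replace (s * (L l p + dL l p * (z / s - p))) with (s*L l p + dL l p * (s*(z/s)) - s * p * dL l p) in H by ring.
  rewrite E in H. nra.
Qed.

Lemma PEeq (L dL : nat -> R -> R) L0 l :
  forall s z, 0 < s -> s * (L l (z / s) - L0) = s * Kfun L dL L0 l (z/s) + dL l (z/s) * z.
Proof.
  intros s z Hs. unfold Kfun. field. lra.
Qed.

Lemma KS (L dL : nat -> R -> R) L0 l :
  (forall p q, L l p + dL l p * (q - p) <= L l q) ->
  forall p xi, Kfun L dL L0 l p <= Kfun L dL L0 l xi + xi * (dL l xi - dL l p).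
Proof.
  intros HT p xi. unfold Kfun. specialize (HT p xi). nra.
Qed.

Lemma E1_inv L L0 j t y a : E1 L L0 j t y = Some a ->
  (y = 0 /\ a = 0) \/ (y <> 0 /\ t <> 0 /\ a = t * L j (- y / t) - t * L0).
Proof.
  unfold E1. destruct (Req_EM_T y 0); [intro H; inversion H; auto|].
  destruct (Req_EM_T t 0); [discriminate|]. intro H; inversion H; auto.
Qed.

Lemma E1_some0 L L0 j t : E1 L L0 j t 0 = Some 0.
Proof. unfold E1. destruct (Req_EM_T 0 0); [auto| lra]. Qed.

Lemma E1_some L L0 j t y : y <> 0 -> t <> 0 ->
  E1 L L0 j t y = Some (t * L j (- y / t) - t * L0).
Proof. intros. unfold E1. destruct (Req_EM_T y 0); [lra|]. destruct (Req_EM_T t 0); [lra|auto]. Qed.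

Lemma E2_inv L L0 i t x b : E2 L L0 i t x = Some b ->
  (x = 0 /\ b = L0) \/ (x <> 0 /\ t <> 1 /\ b = (1 - t) * L i (x / (1 - t)) + t * L0).
Proof.
  unfold E2. destruct (Req_EM_T x 0); [intro H; inversion H; auto|].
  destruct (Req_EM_T t 1); [discriminate|]. intro H; inversion H; auto.
Qed.

Lemma E2_some0 L L0 i t : E2 L L0 i t 0 = Some L0.
Proof. unfold E2. destruct (Req_EM_T 0 0); [auto| lra]. Qed.

Lemma E2_some L L0 i t x : x <> 0 -> t <> 1 ->
  E2 L L0 i t x = Some ((1 - t) * L i (x / (1 - t)) + t * L0).
Proof. intros. unfold E2. destruct (Req_EM_T x 0); [lra|]. destruct (Req_EM_T t 1); [lra|auto]. Qed.

Lemma E1_lb (L dL : nat -> R -> R) L0 j p :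
  (forall p q, L j p + dL j p * (q - p) <= L j q) -> Kfun L dL L0 j p = 0 ->
  forall t y a, 0 <= t -> E1 L L0 j t y = Some a -> - dL j p * y <= a.
Proof.
  intros HT HK t y a Ht HE. destruct (E1_inv _ _ _ _ _ _ HE) as [[-> ->]|[Hy [Ht0 ->]]]; [lra|].
  pose proof (PE L dL L0 j HT t (-y) p ltac:(lra)). rewrite HK in H.
  replace (-y/t) with ((-y)/t) by reflexivity. nra.
Qed.

Lemma E2_lb (L dL : nat -> R -> R) L0 i p :
  (forall p q, L i p + dL i p * (q - p) <= L i q) -> Kfun L dL L0 i p = 0 ->
  forall t x b, t <= 1 -> E2 L L0 i t x = Some b -> dL i p * x + L0 <= b.
Proof.
  intros HT HK t x b Ht HE. destruct (E2_inv _ _ _ _ _ _ HE) as [[-> ->]|[Hx [Ht0 ->]]]; [lra|].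
  pose proof (PE L dL L0 i HT (1-t) x p ltac:(lra)). rewrite HK in H. nra.
Qed.

Lemma E1_move (L dL : nat -> R -> R) L0 j :
  (forall p q, L j p + dL j p * (q - p) <= L j q) ->
  forall t1 t y a, 0 <= t1 <= t -> E1 L L0 j t1 y = Some a ->
  (y <> 0 -> Kfun L dL L0 j (-y/t) <= 0) ->
  exists a', E1 L L0 j t y = Some a' /\ a' <= a.
Proof.
  intros HT t1 t y a Ht HE HK. destruct (E1_inv _ _ _ _ _ _ HE) as [[-> ->]|[Hy [Ht0 ->]]].
  - exists 0. rewrite E1_some0. split; [auto|lra].
  - exists (t * L j (- y / t) - t * L0). rewrite E1_some by lra. split; [auto|].
    specialize (HK Hy).
    pose proof (PE L dL L0 j HT t1 (-y) (-y/t) ltac:(lra)).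
    pose proof (PEeq L dL L0 j t (-y) ltac:(lra)).
    nra.
Qed.

Lemma E2_move (L dL : nat -> R -> R) L0 i :
  (forall p q, L i p + dL i p * (q - p) <= L i q) ->
  forall t t2 x b, 0 <= t <= t2 -> t2 <= 1 -> E2 L L0 i t2 x = Some b ->
  (x <> 0 -> Kfun L dL L0 i (x/(1-t)) <= 0) ->
  exists b', E2 L L0 i t x = Some b' /\ b' <= b.
Proof.
  intros HT t t2 x b Ht Ht2 HE HK. destruct (E2_inv _ _ _ _ _ _ HE) as [[-> ->]|[Hx [Ht0 ->]]].
  - exists L0. rewrite E2_some0. split; [auto|lra].
  - exists ((1 - t) * L i (x / (1 - t)) + t * L0). rewrite E2_some by lra. split; [auto|].
    specialize (HK Hx).
    pose proof (PE L dL L0 i HT (1-t2) x (x/(1-t)) ltac:(lra)).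
    pose proof (PEeq L dL L0 i (1-t) x ltac:(lra)).
    nra.
Qed.

Theorem mainTheorem17 :
  forall (N : nat), (1 <= N)%nat ->
  forall (L dL d2L : nat -> R -> R) (gamma : R), 0 < gamma ->
  (forall i, (1 <= i <= N)%nat -> forall z,
      derivable_pt_lim (L i) z (dL i z) /\
      derivable_pt_lim (dL i) z (d2L i z) /\
      continuity_pt (d2L i) z /\ gamma <= d2L i z) ->
  forall L0 : R,
  (exists j, (1 <= j <= N)%nat /\ L j 0 = L0) ->
  (forall j, (1 <= j <= N)%nat -> L0 <= L j 0) ->
  forall xim xip : nat -> R,
  (forall l, (1 <= l <= N)%nat ->
      xim l <= 0 /\ Kfun L dL L0 l (xim l) = 0 /\
      0 <= xip l /\ Kfun L dL L0 l (xip l) = 0) ->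
  forall i j, (1 <= i <= N)%nat -> (1 <= j <= N)%nat ->
  forall y x : R, 0 <= y -> 0 <= x ->
  (inDelta L L0 xim xip j i y x ->
     is_inf (Djunction_set L L0 j i y x) (Dlinear dL L0 xim xip j i y x)) /\
  (~ inDelta L L0 xim xip j i y x ->
     exists v, is_inf (Djunction_set L L0 j i y x) v /\
               is_inf (Dimplicit_set L L0 j i y x) v).
Proof.
  intros N HN L dL d2L gamma Hg HA L0 _ HL0 xim xip Hxi i j Hi Hj y x Hy Hx.
  assert (HT : forall l, (1 <= l <= N)%nat -> forall p q, L l p + dL l p * (q - p) <= L l q).
  { intros l Hl. apply (tangent (L l) (dL l) (d2L l)); intro z; destruct (HA l Hl z) as [? [? [? ?]]]; auto; lra. }
  assert (HM : forall l, (1 <= l <= N)%nat -> forall p q, p <= q -> dL l p <= dL l q).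
  { intros l Hl. apply (mono_d (dL l) (d2L l)); intro z; destruct (HA l Hl z) as [? [? [? ?]]]; auto; lra. }
  destruct (Hxi j Hj) as [Hjm [HKjm _]].
  destruct (Hxi i Hi) as [_ [_ [Hip HKip]]].
  pose proof (HT j Hj) as HTj. pose proof (HT i Hi) as HTi.
  assert (LB : forall t1 t2 a b, 0 <= t1 -> t2 <= 1 -> E1 L L0 j t1 y = Some a ->
             E2 L L0 i t2 x = Some b -> Dlinear dL L0 xim xip j i y x <= a + b).
  { intros t1 t2 a b H1 H2 E1a E2b. unfold Dlinear.
    pose proof (E1_lb L dL L0 j (xim j) HTj HKjm t1 y a H1 E1a).
    pose proof (E2_lb L dL L0 i (xip i) HTi HKip t2 x b H2 E2b). lra. }
  assert (Kleft : forall p, p <= xim j -> Kfun L dL L0 j p <= 0).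
  { intros p Hp. pose proof (KS L dL L0 j HTj p (xim j)). pose proof (HM j Hj p (xim j) Hp). nra. }
  assert (Kright : forall p, xip i <= p -> Kfun L dL L0 i p <= 0).
  { intros p Hp. pose proof (KS L dL L0 i HTi p (xip i)). pose proof (HM i Hi (xip i) p Hp). nra. }
  assert (KI0 : forall l, (1 <= l <= N)%nat -> L l 0 = L0 -> forall p, Kfun L dL L0 l p <= 0).
  { intros l Hl H0 p. pose proof (KS L dL L0 l (HT l Hl) p 0). unfold Kfun in *. rewrite H0 in *. lra. }
  assert (Hjneg : L j 0 <> L0 -> xim j < 0).
  { intros Hne. destruct (Rle_lt_or_eq_dec _ _ Hjm) as [?|He]; auto. exfalso. apply Hne.
    rewrite He in HKjm. unfold Kfun in HKjm. lra. }
  assert (Hipos : L i 0 <> L0 -> 0 < xip i).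
  { intros Hne. destruct (Rle_lt_or_eq_dec _ _ Hip) as [?|He]; auto. exfalso. apply Hne.
    rewrite <- He in HKip. unfold Kfun in HKip. lra. }
  split.
  - intros HD. destruct HD as [Hjne [Hine HD]].
    pose proof (Hjneg Hjne) as Hm. pose proof (Hipos Hine) as Hp.
    set (a := y / (- xim j)). set (b := 1 - x / xip i).
    assert (Ha : 0 <= a) by (unfold a; apply Rmult_le_pos; [lra| left; apply Rinv_0_lt_compat; lra]).
    assert (Hb : b <= 1) by (unfold b; assert (0 <= x / xip i) by (apply Rmult_le_pos; [lra| left; apply Rinv_0_lt_compat; lra]); lra).
    assert (Hab : a <= b) by (unfold a, b; unfold Rdiv in *; replace (y * / - xim j) with (- (y * / xim j)) by (field; lra); lra).
    split.
    + intros r [t1 [t2 [a' [b' [H1 [H2 [E1a [E2b ->]]]]]]]]. apply (LB t1 t2); auto; lra.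
    + intros m Hm'. apply Hm'. unfold Djunction_set.
      assert (EA : exists a1, E1 L L0 j a y = Some a1 /\ a1 = - dL j (xim j) * y).
      { destruct (Req_dec y 0) as [->|Hy0].
        - exists 0. rewrite E1_some0. split; [auto|ring].
        - assert (Ha0 : a <> 0) by (unfold a; intro H; apply Hy0;
            apply (Rmult_eq_reg_r (/ - xim j)); [rewrite Rmult_0_l; exact H| apply Rinv_neq_0_compat; lra]).
          eexists; rewrite E1_some by assumption; split; [reflexivity|].
          assert (-y / a = xim j) by (unfold a; field; split; [lra|auto]).
          rewrite H. unfold Kfun in HKjm.
          replace (a * L j (xim j) - a * L0) with (a * (L j (xim j) - xim j * dL j (xim j) - L0) + a * xim j * dL j (xim j)) by ring.
          rewrite HKjm. replace (a * xim j) with (-y) by (unfold a; field; lra). ring. }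
      assert (EB : exists b1, E2 L L0 i b x = Some b1 /\ b1 = dL i (xip i) * x + L0).
      { destruct (Req_dec x 0) as [->|Hx0].
        - exists L0. rewrite E2_some0. split; [auto|ring].
        - assert (Hb0 : b <> 1) by (unfold b; intro H; apply Hx0;
            assert (x / xip i = 0) by lra;
            apply (Rmult_eq_reg_r (/ xip i)); [rewrite Rmult_0_l; exact H0| apply Rinv_neq_0_compat; lra]).
          eexists; rewrite E2_some by assumption; split; [reflexivity|].
          assert (E : 1 - b = x / xip i) by (unfold b; ring).
          rewrite E. assert (x / (x / xip i) = xip i) by (field; split; lra).
          rewrite H. unfold Kfun in HKip.
          replace (x / xip i * L i (xip i) + b * L0) with (x / xip i * (L i (xip i) - xip i * dL i (xip i) - L0) + x / xip i * xip i * dL i (xip i) + (x / xip i + b) * L0) by ring.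
          rewrite HKip. replace (x / xip i * xip i) with x by (field; lra).
          replace (x / xip i + b) with 1 by (unfold b; ring). ring. }
      destruct EA as [a1 [EA ->]]. destruct EB as [b1 [EB ->]].
      exists a, b, (- dL j (xim j) * y), (dL i (xip i) * x + L0).
      split; [lra|]. split; [lra|]. split; [auto|]. split; [auto|]. unfold Dlinear. ring.
  - intros HnD.
    assert (EX : forall r, Djunction_set L L0 j i y x r -> exists r', Dimplicit_set L L0 j i y x r' /\ r' <= r).
    { intros r [t1 [t2 [a [b [H1 [H2 [E1a [E2b ->]]]]]]]].
      assert (mkI : forall t a' b', 0 <= t <= 1 -> E1 L L0 j t y = Some a' -> E2 L L0 i t x = Some b' ->
                a' <= a -> b' <= b -> exists r', Dimplicit_set L L0 j i y x r' /\ r' <= a + b).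
      { intros t a' b' Ht Ea Eb Ha Hb. exists (a' + b'). split; [|lra].
        exists t, a', b'. auto. }
      destruct (Rle_dec (Kfun L dL L0 j (-y/t2)) 0) as [K1|K1].
      { destruct (E1_move L dL L0 j HTj t1 t2 y a H1 E1a (fun _ => K1)) as [a' [Ea Ha]].
        apply (mkI t2 a' b); auto; lra. }
      destruct (Req_dec y 0) as [Hy0|Hy0].
      { destruct (E1_move L dL L0 j HTj t1 t2 y a H1 E1a (fun H => False_ind _ (H Hy0))) as [a' [Ea Ha]].
        apply (mkI t2 a' b); auto; lra. }
      destruct (Rle_dec (Kfun L dL L0 i (x/(1-t1))) 0) as [K2|K2].
      { destruct (E2_move L dL L0 i HTi t1 t2 x b ltac:(lra) H2 E2b (fun _ => K2)) as [b' [Eb Hb]].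
        apply (mkI t1 a b'); auto; lra. }
      destruct (Req_dec x 0) as [Hx0|Hx0].
      { destruct (E2_move L dL L0 i HTi t1 t2 x b ltac:(lra) H2 E2b (fun H => False_ind _ (H Hx0))) as [b' [Eb Hb]].
        apply (mkI t1 a b'); auto; lra. }
      assert (Hjne : L j 0 <> L0) by (intro H; apply K1; apply (KI0 j Hj H)).
      assert (Hine : L i 0 <> L0) by (intro H; apply K2; apply (KI0 i Hi H)).
      pose proof (Hjneg Hjne) as Hm. pose proof (Hipos Hine) as Hp.
      destruct (E1_inv _ _ _ _ _ _ E1a) as [[? _]|[_ [Ht10 _]]]; [lra|].
      destruct (E2_inv _ _ _ _ _ _ E2b) as [[? _]|[_ [Ht21 _]]]; [lra|].
      assert (G1 : xim j < - y / t2) by (destruct (Rlt_le_dec (xim j) (-y/t2)); auto; exfalso; apply K1; apply Kleft; auto).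
      assert (G2 : x / (1 - t1) < xip i) by (destruct (Rlt_le_dec (x/(1-t1)) (xip i)); auto; exfalso; apply K2; apply Kright; auto).
      assert (ND : 1 <= x / xip i - y / xim j).
      { destruct (Rle_dec 1 (x / xip i - y / xim j)); auto. exfalso. apply HnD. split; auto. split; auto. lra. }
      set (s := y / (- xim j)).
      assert (Ht2s : s < t2).
      { unfold s. apply (Rmult_lt_reg_r (- xim j)); [lra|].
        replace (y / - xim j * - xim j) with y by (field; lra).
        assert (- y / t2 * t2 = - y) by (field; lra).
        assert (xim j * t2 < - y / t2 * t2) by (apply Rmult_lt_compat_r; lra). nra. }
      assert (Hxs : x / xip i < 1 - t1).
      { apply (Rmult_lt_reg_r (xip i)); [lra|].
        replace (x / xip i * xip i) with x by (field; lra).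
        assert (x / (1 - t1) * (1 - t1) = x) by (field; lra).
        assert (x / (1 - t1) * (1-t1) < xip i * (1-t1)) by (apply Rmult_lt_compat_r; lra). nra. }
      assert (Hs1 : 1 - x / xip i <= s).
      { unfold s. replace (y / - xim j) with (- (y / xim j)) by (field; lra). lra. }
      destruct (E1_move L dL L0 j HTj t1 s y a ltac:(lra) E1a) as [a' [Ea Ha]].
      { intros _. replace (-y/s) with (xim j) by (unfold s; field; split; lra). lra. }
      destruct (E2_move L dL L0 i HTi s t2 x b ltac:(lra) H2 E2b) as [b' [Eb Hb]].
      { intros _. apply Kright.
        assert (0 < 1 - s) by lra.
        apply (Rmult_le_reg_r (1 - s)); [lra|].
        replace (x / (1 - s) * (1 - s)) with x by (field; lra).
        assert (x / xip i * xip i = x) by (field; lra).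
        assert ((1 - s) * xip i <= x / xip i * xip i) by (apply Rmult_le_compat_r; lra). nra. }
      apply (mkI s a' b'); auto; lra. }
    set (S := fun r => Dimplicit_set L L0 j i y x (- r)).
    assert (SB : bound S).
    { exists (- Dlinear dL L0 xim xip j i y x). intros r [t [a [b [Ht [Ea [Eb Hr]]]]]].
      assert (Dlinear dL L0 xim xip j i y x <= a + b) by (apply (LB t t); auto; lra). lra. }
    assert (SN : exists r, S r).
    { assert (EA : exists a, E1 L L0 j (1/2) y = Some a).
      { destruct (Req_dec y 0) as [->|Hy0]; [eexists; apply E1_some0|eexists; apply E1_some; lra]. }
      assert (EB : exists b, E2 L L0 i (1/2) x = Some b).
      { destruct (Req_dec x 0) as [->|Hx0]; [eexists; apply E2_some0|eexists; apply E2_some; lra]. }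
      destruct EA as [a Ea]; destruct EB as [b Eb]. exists (- (a + b)). exists (1/2), a, b.
      split; [lra|]. split; auto. split; auto. ring. }
    destruct (completeness S SB SN) as [m [Hub Hlub]].
    assert (HI : is_inf (Dimplicit_set L L0 j i y x) (- m)).
    { split.
      - intros r Hr. assert (S (- r)) by (unfold S; rewrite Ropp_involutive; auto).
        specialize (Hub _ H). lra.
      - intros m' Hm'. assert (m <= - m'); [|lra]. apply Hlub. intros r Hr. specialize (Hm' _ Hr). lra. }
    exists (- m). split; auto.
    destruct HI as [HI1 HI2]. split.
    + intros r Hr. destruct (EX r Hr) as [r' [Hr' Hle]]. specialize (HI1 _ Hr'). lra.
    + intros m' Hm'. apply HI2. intros r [t [a [b [Ht [Ea [Eb ->]]]]]]. apply Hm'.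
      exists t, t, a, b. split; [lra|]. split; [lra|]. auto.
Qed.
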